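(* Let $A$ be a $\Bbbk$-algebra which is a domain. For $k=1,\dots,m$ let $\varphi_k$ be algebra automorphisms of $A$ and $\partial_k$ locally nilpotent skew derivations of $A$ with respect to $\varphi_k$, and suppose $\partial_\ell\circ\varphi_k=q_{k\ell}\,\varphi_k\circ\partial_\ell$ for all $1\le k\le\ell\le m$, where $q_{k\ell}\in\Bbbk^\times$ and each $q_{kk}$ is not a root of unity. Then the string map $\nu=\nu_{(\partial_1,\dots,\partial_m)}:A\setminus\{0\}\to\mathbb Z_{\ge0}^m$ is a valuation (with respect to the lexicographic order) satisfying $\nu(ab)=\nu(a)+\nu(b)$ for all nonzero $a,b\in A$.
   Context: A skew derivation with respect to $\varphi$ is a linear map $\partial$ with $\partial(ab)=\partial(a)b+\varphi(a)\partial(b)$. For a locally nilpotent linear map $E$ and $x\ne0$, $\nu_E(x)$ is the largest $n\ge0$ with $E^n(x)\ne0$, and $\lambda_E(x)=E^{\nu_E(x)}(x)$ (up to a nonzero scalar). The string map is defined by $\nu_{(\partial_1,\dots,\partial_m)}(x)=(a_1,\dots,a_m)$ where $x_0=x$, $a_k=\nu_{\partial_k}(x_{k-1})$ and $x_k=\partial_k^{a_k}(x_{k-1})$. The lexicographic order on $\mathbb Z_{\ge0}^m$ compares the first coordinate first. A valuation into an ordered set $C$ means $\nu(cx)=\nu(x)$ for $c\in\Bbbk^\times$ and $\nu(x+y)\le\max(\nu(x),\nu(y))$ when $x+y\ne0$. *)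

(* Defs.v *)
From HB Require Import structures.
From mathcomp Require Import all_boot all_order all_algebra.
From Stdlib Require Import ClassicalEpsilon.
Set Implicit Arguments. Unset Strict Implicit. Unset Printing Implicit Defensive.
Import Order.TTheory GRing.Theory Num.Theory.
Local Open Scope ring_scope.

Section Defs.
Variables (K : fieldType) (A : algType K).

Definition klinear (f : A -> A) : Prop :=
  forall (c : K) (x y : A), f (c *: x + y) = c *: f x + f y.

Definition is_domain : Prop :=
  forall a b : A, a * b = 0 -> a = 0 \/ b = 0.

Definition alg_auto (f : A -> A) : Prop :=
  [/\ klinear f, f 1 = 1, (forall a b, f (a * b) = f a * f b) & bijective f].

Definition skew_derivation (phi d : A -> A) : Prop :=
  klinear d /\ forall a b, d (a * b) = d a * b + phi a * d b.

Definition locally_nilpotent (E : A -> A) : Prop :=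
  forall x, exists n, iter n E x = 0.

Definition nuE (E : A -> A) (x : A) : nat :=
  epsilon (inhabits 0%N)
    (fun n => iter n E x <> 0 /\ forall k, (n < k)%N -> iter k E x = 0).

Fixpoint string_map (ds : seq (A -> A)) (x : A) : seq nat :=
  match ds with
  | [::] => [::]
  | d :: ds' => nuE d x :: string_map ds' (iter (nuE d x) d x)
  end.

End Defs.

Fixpoint lexle (s t : seq nat) : bool :=
  match s, t with
  | [::], _ => true
  | _ :: _, [::] => false
  | x :: s', y :: t' => (x < y)%N || ((x == y) && lexle s' t')
  end.

Definition seq_addn (s t : seq nat) : seq nat := [seq (p.1 + p.2)%N | p <- zip s t].

(* Main.v *)
Require Import Defs.
From HB Require Import structures.
From mathcomp Require Import all_boot all_order all_algebra.
From mathcomp Require Import zify ring.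
From Stdlib Require Import ClassicalEpsilon.
Import GRing.Theory.
Local Open Scope ring_scope.
Set Implicit Arguments. Unset Strict Implicit.

Section Aux.
Variables (K : fieldType) (A : algType K).

Section Lin.
Variable f : A -> A.
Hypothesis Hf : klinear f.
Lemma lin0 : f 0 = 0.
Proof. have h := Hf 1 0 0; rewrite !scale1r addr0 in h.
have e : f 0 - f 0 = f 0 + f 0 - f 0 by rewrite -h.
by rewrite subrr addrK in e. Qed.
Lemma linD x y : f (x + y) = f x + f y.
Proof. by have := Hf 1 x y; rewrite !scale1r. Qed.
Lemma linZ c x : f (c *: x) = c *: f x.
Proof. by have := Hf c x 0; rewrite !addr0 lin0 addr0. Qed.
End Lin.

Lemma iter_klinear (f : A -> A) n : klinear f -> klinear (iter n f).
Proof.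
move=> Hf; elim: n => [|n IH] c x y //=.
by rewrite IH Hf.
Qed.

Lemma comp_klinear (f g : A -> A) : klinear f -> klinear g -> klinear (f \o g).
Proof. by move=> Hf Hg c x y /=; rewrite Hg Hf. Qed.

Lemma iter0 (f : A -> A) n : klinear f -> iter n f 0 = 0.
Proof. by move=> Hf; apply: lin0; apply: iter_klinear. Qed.

Lemma iter_comm_l (D g : A -> A) (c : K) k x :
  klinear D -> klinear g -> (forall y, D (g y) = c *: g (D y)) ->
  iter k D (g x) = c ^+ k *: g (iter k D x).
Proof.
move=> HD Hg Hc; elim: k => [|k IH] /=; first by rewrite scale1r.
by rewrite IH linZ // Hc scalerA exprSr.
Qed.

Lemma iter_comm_r (D g : A -> A) (c : K) t x :
  klinear D -> klinear g -> (forall y, D (g y) = c *: g (D y)) ->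
  D (iter t g x) = c ^+ t *: iter t g (D x).
Proof.
move=> HD Hg Hc; elim: t => [|t IH] /=; first by rewrite scale1r.
by rewrite Hc IH linZ // scalerA exprS.
Qed.

Definition top (E : A -> A) (x : A) n := iter n E x != 0 /\ iter n.+1 E x = 0.

Lemma iter_zero_mono (E : A -> A) x k k' : klinear E -> iter k E x = 0 -> (k <= k')%N -> iter k' E x = 0.
Proof.
move=> HE Hk Hkk; rewrite -(subnK Hkk) iterD Hk; exact: iter0.
Qed.

Lemma nuE_top (E : A -> A) x n : klinear E -> top E x n -> nuE E x = n.
Proof.
move=> HE [H1 H2].
have P : forall k, (n < k)%N -> iter k E x = 0.
  by move=> k Hk; exact: (iter_zero_mono HE H2 Hk).
have := epsilon_spec (inhabits 0%N)
    (fun n => iter n E x <> 0 /\ forall k, (n < k)%N -> iter k E x = 0).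
rewrite /nuE; case; first by exists n; split => //; apply/eqP.
move=> Q1 Q2.
set N := epsilon _ _ in Q1 Q2 *.
case: (ltngtP N n) => // h.
- by move: H1; rewrite Q2 // eqxx.
- by case: Q1; apply: P.
Qed.

Lemma top_exists (E : A -> A) x : klinear E -> locally_nilpotent E -> x != 0 -> exists n, top E x n.
Proof.
move=> HE HN Hx.
have ex : exists n, iter n E x == 0 by case: (HN x) => n Hn; exists n; apply/eqP.
case: (ex_minnP ex) => n /eqP Hn Hmin.
case: n Hn Hmin => [|n] Hn Hmin; first by move: Hx; rewrite -[x]/(iter 0 E x) Hn eqxx.
exists n; split => //.
by apply/negP => /Hmin; rewrite ltnn.
Qed.


Definition fq (q : K) (n : nat) : K := \prod_(i < n) (1 - q ^+ i.+1).

Lemma fqS q n : fq q n.+1 = fq q n * (1 - q ^+ n.+1).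
Proof. by rewrite /fq big_ord_recr. Qed.

Lemma fq0 q : fq q 0%N = 1.
Proof. by rewrite /fq big_ord0. Qed.

Lemma fq_neq0 q n : (forall k, (0 < k)%N -> q ^+ k != 1) -> fq q n != 0.
Proof.
move=> Hq; elim: n => [|n IH]; first by rewrite fq0 oner_eq0.
by rewrite fqS mulf_neq0 // subr_eq0 eq_sym Hq.
Qed.

Section Prod.
Variables (D phi : A -> A) (q : K).
Hypotheses (HD : klinear D) (Hphi : klinear phi)
  (Hleib : forall a b, D (a * b) = D a * b + phi a * D b)
  (Hcomm : forall x, D (phi x) = q *: phi (D x)).

Lemma prod_iter n : forall s t a b, (s + t = n)%N -> iter s.+1 D a = 0 -> iter t.+1 D b = 0 ->
  (fq q s * fq q t) *: iter n D (a * b) = fq q n *: (iter t phi (iter s D a) * iter t D b)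
  /\ iter n.+1 D (a * b) = 0.
Proof.
have split k a b : iter k.+1 D (a * b) = iter k D (D a * b) + iter k D (phi a * D b).
  by rewrite iterSr Hleib linD //; apply: iter_klinear.
have itphi k x : iter k.+1 D (phi x) = 0 -> True by [].
have phiz k x : iter k D x = 0 -> iter k D (phi x) = 0.
  by move=> h; rewrite (iter_comm_l _ _ HD Hphi Hcomm) h lin0 // scaler0.
elim: n => [|n IH] s t a b Hst Ha Hb.
  have [Hs Ht] : s = 0%N /\ t = 0%N by lia.
  subst s t; move: Ha Hb => /= Ha Hb.
  by rewrite fq0 mulr1 scale1r Hleib Ha Hb mul0r mulr0 addr0.
have ItD k (x y : A) : iter k D (x + y) = iter k D x + iter k D y.
  by apply: linD; apply: iter_klinear.
have ItZ k (c : K) (x : A) : iter k D (c *: x) = c *: iter k D x.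
  by apply: linZ; apply: iter_klinear.
have ItPZ k (c : K) (x : A) : iter k phi (c *: x) = c *: iter k phi x.
  by apply: linZ; apply: iter_klinear.
case: s Ha Hst => [|s'] Ha Hst; case: t Hb Hst => [|t'] Hb Hst.
- by [].
-
  have Da0 : D a = 0 by exact: Ha.
  have [IH1 IH2] := IH 0%N t' (phi a) (D b) ltac:(lia) ltac:(exact: phiz) ltac:(by rewrite -iterSr).
  rewrite split Da0 mul0r iter0 // add0r; split; last first.
    by rewrite split Da0 mul0r iter0 // add0r IH2.
  have -> : t' = n by lia.
  move: IH1; have -> : t' = n by lia.
  rewrite fq0 mul1r => IH1.
  rewrite mul1r fqS mulrC -scalerA IH1 scalerA /= -!iterSr.
  by rewrite !iterS.
-
  have Db0 : D b = 0 by exact: Hb.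
  have [IH1 IH2] := IH s' 0%N (D a) b ltac:(lia) ltac:(by rewrite -iterSr) Hb.
  rewrite split Db0 mulr0 iter0 // addr0; split; last first.
    by rewrite split Db0 mulr0 iter0 // addr0 IH2.
  move: IH1; have -> : s' = n by lia.
  rewrite fq0 mulr1 => IH1.
  by rewrite mulr1 fqS mulrC -scalerA IH1 scalerA /= -iterSr.
- have [IH1 IH1'] := IH s' t'.+1 (D a) b ltac:(lia) ltac:(by rewrite -iterSr) Hb.
  have [IH2 IH2'] := IH s'.+1 t' (phi a) (D b) ltac:(lia) ltac:(exact: phiz) ltac:(by rewrite -iterSr).
  rewrite split; split; last by rewrite split IH1' IH2' addr0.
  rewrite scalerDr.
  set Y := iter t'.+1 phi (iter s'.+1 D a) * iter t'.+1 D b.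
  have E1 : (fq q s'.+1 * fq q t'.+1) *: iter n D (D a * b) = (1 - q ^+ s'.+1) *: (fq q n *: Y).
    rewrite /Y [iter s'.+1 D a]iterSr -IH1 scalerA [fq q s'.+1]fqS; congr (_ *: _); ring.
  have E2 : (fq q s'.+1 * fq q t'.+1) *: iter n D (phi a * D b) = ((1 - q ^+ t'.+1) * q ^+ s'.+1) *: (fq q n *: Y).
    have -> : (fq q s'.+1 * fq q t'.+1) = (1 - q ^+ t'.+1) * (fq q s'.+1 * fq q t') by rewrite [fq q t'.+1]fqS; ring.
    rewrite -[LHS]scalerA IH2 -[RHS]scalerA; congr (_ *: _).
    rewrite (iter_comm_l _ _ HD Hphi Hcomm) ItPZ -scalerAl !scalerA mulrC /Y.
    by rewrite [iter t'.+1 phi _]iterSr [iter t'.+1 D b]iterSr.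
  rewrite E1 E2 !scalerA -scalerDl; congr (_ *: _).
  rewrite fqS.
  have -> : q ^+ n.+1 = q ^+ s'.+1 * q ^+ t'.+1 by rewrite -exprD; congr (_ ^+ _); lia.
  ring.
Qed.

End Prod.

End Aux.

Fixpoint lexle_refl (s : seq nat) : lexle s s.
Proof. case: s => [|x s] //=; by rewrite eqxx lexle_refl orbT. Qed.

Section Main.
Variables (K : fieldType) (A : algType K) (m : nat)
    (phi d : 'I_m -> A -> A) (q : 'I_m -> 'I_m -> K).
Hypotheses (Hdom : is_domain A) (Hauto : forall k, alg_auto (phi k))
  (Hskew : forall k, skew_derivation (phi k) (d k))
  (Hnil : forall k, locally_nilpotent (d k))
  (Hq0 : forall k l : 'I_m, (k <= l)%N -> q k l != 0)
  (Hcomm : forall k l : 'I_m, (k <= l)%N -> forall x, d l (phi k x) = q k l *: phi k (d l x))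
  (Hroot : forall k : 'I_m, forall n, (0 < n)%N -> q k k ^+ n != 1).

Let Hd k : klinear (d k) := (Hskew k).1.
Let Hphi k : klinear (phi k). Proof. by case: (Hauto k). Qed.

Lemma nu_scale (js : seq 'I_m) c x : c != 0 ->
  string_map [seq d i | i <- js] (c *: x) = string_map [seq d i | i <- js] x.
Proof.
move=> Hc; elim: js x => [|i js IH] x //=.
have [->|Hx] := eqVneq x 0; first by rewrite scaler0.
have [n Hn] := top_exists (Hd i) (Hnil i) Hx.
have Hn' : top (d i) (c *: x) n.
  case: Hn => H1 H2; split; rewrite linZ ?scaler_eq0 ?negb_or ?Hc ?H1 ?H2 ?scaler0 //;
  exact: iter_klinear.
rewrite (nuE_top (Hd i) Hn) (nuE_top (Hd i) Hn') linZ ?IH //; exact: iter_klinear.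
Qed.

Lemma nu_val (js : seq 'I_m) x y : x != 0 -> y != 0 -> x + y != 0 ->
  lexle (string_map [seq d i | i <- js] (x + y)) (string_map [seq d i | i <- js] x)
  || lexle (string_map [seq d i | i <- js] (x + y)) (string_map [seq d i | i <- js] y).
Proof.
elim: js x y => [|i js IH] x y Hx Hy Hxy //=.
have HD := Hd i.
have ItD k : iter k (d i) (x + y) = iter k (d i) x + iter k (d i) y.
  by apply: linD; apply: iter_klinear.
have [sx [Hx1 Hx2]] := top_exists HD (Hnil i) Hx.
have [sy [Hy1 Hy2]] := top_exists HD (Hnil i) Hy.
have [sz [Hz1 Hz2]] := top_exists HD (Hnil i) Hxy.
rewrite (nuE_top HD (conj Hx1 Hx2)) (nuE_top HD (conj Hy1 Hy2)).
case: (ltngtP sx sy) => Hs.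
- have Ez : top (d i) (x + y) sy.
    split; rewrite ItD ?Hy2 ?addr0.
      by rewrite (iter_zero_mono HD Hx2 Hs) add0r.
    exact: (iter_zero_mono HD Hx2 (leqW Hs)).
  rewrite (nuE_top HD Ez).
  have -> : iter sy (d i) (x + y) = iter sy (d i) y by rewrite ItD (iter_zero_mono HD Hx2 Hs) add0r.
  by rewrite /= ltnn eqxx lexle_refl !orbT.
- have Ez : top (d i) (x + y) sx.
    split; rewrite ItD ?Hx2 ?add0r.
      by rewrite (iter_zero_mono HD Hy2 Hs) addr0.
    exact: (iter_zero_mono HD Hy2 (leqW Hs)).
  rewrite (nuE_top HD Ez).
  have -> : iter sx (d i) (x + y) = iter sx (d i) x by rewrite ItD (iter_zero_mono HD Hy2 Hs) addr0.
  by rewrite /= ltnn eqxx lexle_refl !orbT.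
- subst sy.
  have [H0|Hn0] := eqVneq (iter sx (d i) (x + y)) 0.
    have Hlt : (sz < sx)%N.
      rewrite ltnNge; apply/negP => Hle.
      by move: Hz1; rewrite (iter_zero_mono HD H0 Hle) eqxx.
    by rewrite (nuE_top HD (conj Hz1 Hz2)) /= Hlt.
  have Ez : top (d i) (x + y) sx by split => //; rewrite ItD Hx2 Hy2 addr0.
  rewrite (nuE_top HD Ez) /= ltnn eqxx /=.
  rewrite ItD in Hn0 *.
  exact: IH.
Qed.

Lemma phi_ker k x : phi k x = 0 -> x = 0.
Proof.
case: (Hauto k) => _ _ _ Hb h; apply: (bij_inj Hb); rewrite h.
by rewrite (lin0 (Hphi k)).
Qed.

Lemma iter_phi_ker k t x : iter t (phi k) x = 0 -> x = 0.
Proof. by elim: t => [|t IH] //= /phi_ker /IH. Qed.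

Lemma nu_mul (js : seq 'I_m) : sorted (fun i j : 'I_m => (i <= j)%N) js ->
  forall (Psi : A -> A) a b, klinear Psi -> (forall x, Psi x = 0 -> x = 0) ->
  (forall l, l \in js -> exists2 c : K, c != 0 & forall x, d l (Psi x) = c *: Psi (d l x)) ->
  a != 0 -> b != 0 ->
  string_map [seq d i | i <- js] (Psi a * b) =
  seq_addn (string_map [seq d i | i <- js] a) (string_map [seq d i | i <- js] b).
Proof.
elim: js => [|i js IH] Hs Psi a b HP HP0 HPc Ha Hb //=.
have Hs' := path_sorted Hs.
have Hall := order_path_min (fun (y x z : 'I_m) => @leq_trans y x z) Hs.
have HD := Hd i.
have [c0 Hc0 Hcc] := HPc i (mem_head _ _).
have [s [Ha1 Ha2]] := top_exists HD (Hnil i) Ha.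
have [t [Hb1 Hb2]] := top_exists HD (Hnil i) Hb.
have ItPa k : iter k (d i) (Psi a) = c0 ^+ k *: Psi (iter k (d i) a).
  exact: (iter_comm_l k a HD HP Hcc).
have HPa2 : iter s.+1 (d i) (Psi a) = 0 by rewrite ItPa Ha2 (lin0 HP) scaler0.
have [P1 P2] := prod_iter HD (Hphi i) (Hskew i).2 (Hcomm (leqnn i)) (erefl (s + t)%N) HPa2 Hb2.
set X := iter t (phi i) (Psi (iter s (d i) a)) * iter t (d i) b.
have HX : X != 0.
  apply/eqP => /Hdom [/iter_phi_ker /HP0 /eqP|/eqP]; first by rewrite (negbTE Ha1).
  by rewrite (negbTE Hb1).
have Hf : fq (q i i) s * fq (q i i) t != 0 by rewrite mulf_neq0 // fq_neq0 //; exact: Hroot.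
set kap := (fq (q i i) s * fq (q i i) t)^-1 * (fq (q i i) (s + t) * c0 ^+ s).
have Hkap : kap != 0.
  by rewrite /kap !mulf_neq0 ?invr_eq0 ?expf_neq0 // fq_neq0 //; exact: Hroot.
have E : iter (s + t) (d i) (Psi a * b) = kap *: X.
  rewrite -[LHS]scale1r -(mulVf Hf) -scalerA P1 ItPa (linZ (iter_klinear _ (Hphi i))).
  by rewrite -scalerAl !scalerA /kap mulrA.
have Htop : top (d i) (Psi a * b) (s + t).
  by split => //; rewrite E scaler_eq0 negb_or Hkap HX.
rewrite (nuE_top HD Htop) (nuE_top HD (conj Ha1 Ha2)) (nuE_top HD (conj Hb1 Hb2)).
rewrite E nu_scale //.
have -> : forall (u v : seq nat) s t, seq_addn (s :: u) (t :: v) = (s + t)%N :: seq_addn u v by [].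
congr (_ :: _).
apply: (IH Hs' (iter t (phi i) \o Psi)) => //.
- by apply: comp_klinear => //; apply: iter_klinear.
- by move=> x /= /iter_phi_ker /HP0.
- move=> l Hl.
  have Hil : (i <= l)%N by move/allP: Hall => /(_ l Hl).
  have [c1 Hc1 Hcc1] := HPc l (mem_behead (s:=i :: js) Hl).
  exists (q i l ^+ t * c1); first by rewrite mulf_neq0 // expf_neq0 // Hq0.
  move=> x /=.
  rewrite (iter_comm_r t (Psi x) (Hd l) (Hphi i) (Hcomm Hil)) Hcc1 linZ; last exact: iter_klinear.
  by rewrite scalerA.
Qed.

End Main.

Theorem mainTheorem12 (K : fieldType) (A : algType K) (m : nat)
    (phi d : 'I_m -> A -> A) (q : 'I_m -> 'I_m -> K) :
  is_domain A ->
  (forall k, alg_auto (phi k)) ->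
  (forall k, skew_derivation (phi k) (d k)) ->
  (forall k, locally_nilpotent (d k)) ->
  (forall k l : 'I_m, (k <= l)%N -> q k l != 0) ->
  (forall k l : 'I_m, (k <= l)%N -> forall x, d l (phi k x) = q k l *: phi k (d l x)) ->
  (forall k : 'I_m, forall n, (0 < n)%N -> q k k ^+ n != 1) ->
  let nu := string_map [seq d i | i <- enum 'I_m] in
  [/\ (forall (c : K) (x : A), c != 0 -> x != 0 -> nu (c *: x) = nu x),
      (forall x y : A, x != 0 -> y != 0 -> x + y != 0 ->
         lexle (nu (x + y)) (nu x) || lexle (nu (x + y)) (nu y))
    & (forall a b : A, a != 0 -> b != 0 -> nu (a * b) = seq_addn (nu a) (nu b))].
Proof.
move=> Hdom Hauto Hskew Hnil Hq0 Hcomm Hroot nu; split.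
- by move=> c x Hc _; rewrite /nu; apply: nu_scale.
- by move=> x y Hx Hy Hxy; rewrite /nu; apply: nu_val.
- move=> a b Ha Hb; rewrite /nu.
  have Hs : sorted (fun i j : 'I_m => (i <= j)%N) (enum 'I_m).
    by have := iota_sorted 0 m; rewrite -val_enum_ord sorted_map.
  apply: (nu_mul Hdom Hauto Hskew Hnil Hq0 Hcomm Hroot Hs (Psi := id)) => //.
  move=> l _; exists 1; first exact: oner_neq0.
  by move=> x; rewrite scale1r.
Qed.
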